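(* Let $V$ be a finite nonempty set and $ij\in P_V$. For every $x\in X_V$, the vector $x'\in\{0,1\}^{P_V}$ defined for all $pq\in P_V$ by $x'_{pq}=1$ if $x_{pi}=x_{jq}=1$, and $x'_{pq}=x_{pq}$ otherwise, satisfies $x'\in X_V$.
   Context: $P_V=\{pq\in V^2\mid p\neq q\}$. $X_V$ is the set of all $x\in\{0,1\}^{P_V}$ such that $x_{pq}+x_{qr}-x_{pr}\le 1$ for all pairwise distinct $p,q,r\in V$. Convention: for $x\in X_V$ and $a\in V$, $x_{aa}:=1$ (so, e.g., $x_{pi}=1$ holds when $p=i$). *)

(* Defs.v *)
From mathcomp Require Import all_boot.
Set Implicit Arguments. Unset Strict Implicit. Unset Printing Implicit Defensive.

(* A vector x in {0,1}^{P_V} is represented as a function x : V -> V -> bool;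
   its values on the diagonal (p = p) are irrelevant and never used. *)

Definition xval (V : finType) (x : V -> V -> bool) (p q : V) : bool :=
  if p == q then true else x p q.

Definition in_XV (V : finType) (x : V -> V -> bool) : Prop :=
  forall p q r : V, p != q -> q != r -> p != r ->
    (x p q + x q r <= 1 + x p r)%N.

Definition xprime (V : finType) (i j : V) (x : V -> V -> bool) (p q : V) : bool :=
  if xval x p i && xval x j q then true else x p q.

(* Main.v *)
Require Import Defs.
From mathcomp Require Import all_boot.

Lemma ytrans (V : finType) (x : V -> V -> bool) (hx : in_XV x) p q r :
  xval x p q -> xval x q r -> xval x p r.
Proof.
rewrite /xval.
case: (eqVneq p q) => [->|pq] //.
case: (eqVneq q r) => [<-|qr]; first by case: (p == q).
move: qr => qr.
case: (eqVneq p r) => [//|pr] H1 H2.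
have := hx p q r pq qr pr; rewrite H1 H2.
by case: (x p r).
Qed.

Lemma xpE (V : finType) (i j : V) (x : V -> V -> bool) p q : p != q ->
  xprime i j x p q = (xval x p i && xval x j q) || xval x p q.
Proof.
move=> pq; have E : xval x p q = x p q by rewrite /xval (negbTE pq).
by rewrite E /xprime; case: (_ && _).
Qed.

Theorem lemma5p4 (V : finType) (v0 : V) (i j : V) (hij : i != j)
  (x : V -> V -> bool) (hx : in_XV x) :
  in_XV (xprime i j x).
Proof.
move=> p q r pq qr pr; rewrite !xpE //.
have F1 : xval x p q ==> xval x q r ==> xval x p r.
  by apply/implyP=> a; apply/implyP; apply: ytrans.
have F2 : xval x j q ==> xval x q r ==> xval x j r.
  by apply/implyP=> a; apply/implyP; apply: ytrans.
have F3 : xval x p q ==> xval x q i ==> xval x p i.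
  by apply/implyP=> a; apply/implyP; apply: ytrans.
move: F1 F2 F3.
case: (xval x p q); case: (xval x q r); case: (xval x p r);
case: (xval x j q); case: (xval x j r); case: (xval x q i); case: (xval x p i).
all: by [].
Qed.
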